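(* Let $\sigma=\begin{pmatrix}\frac13&0\\0&\frac23\end{pmatrix}$. There exists an extreme point of the convex set $\mathcal{CP}(M_2,M_2;\sigma,\sigma)$ of Kraus rank $2$.
   Context: $M_n$ denotes the complex $n\times n$ matrices. For positive semidefinite $A\in M_{d_1}$, $B\in M_{d_2}$, $\mathcal{CP}(M_{d_1},M_{d_2};A,B)$ is the convex set of completely positive maps $\Phi:M_{d_1}\to M_{d_2}$ with $\Phi(I_{d_1})=B$ and $\Phi^*(I_{d_2})=A$ ($\Phi^*$ the Hilbert–Schmidt adjoint); equivalently $\Phi(X)=\sum_iK_iXK_i^\dagger$ with $\sum_iK_i^\dagger K_i=A$, $\sum_iK_iK_i^\dagger=B$. An extreme point of a convex set $\mathcal{K}$ is an element not expressible as $t\Phi_1+(1-t)\Phi_2$ with $t\in(0,1)$ and distinct $\Phi_1,\Phi_2\in\mathcal{K}$. The Kraus rank of a completely positive map is the minimal number of Kraus operators in a Kraus decomposition (equal to the rank of its Choi matrix). *)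

(* Defs.v *)
From HB Require Import structures.
From mathcomp Require Import all_boot all_order all_algebra.
From mathcomp Require Import complex.
From mathcomp Require Import reals.
Set Implicit Arguments. Unset Strict Implicit. Unset Printing Implicit Defensive.
Import Order.TTheory GRing.Theory Num.Theory.
Local Open Scope ring_scope.
Local Open Scope complex_scope.

Section QChannels.
Variable R : realType.
Local Notation C := R[i].

Definition adjmx m n (A : 'M[C]_(m, n)) : 'M[C]_(n, m) := (map_mx (@conjc R) A)^T.

Definition has_kraus d1 d2 (Phi : 'M[C]_d1 -> 'M[C]_d2) (n : nat) : Prop :=
  exists K : 'I_n -> 'M[C]_(d2, d1),
    forall X : 'M[C]_d1, Phi X = \sum_(i < n) (K i *m X *m adjmx (K i)).

Definition completely_positive d1 d2 (Phi : 'M[C]_d1 -> 'M[C]_d2) : Prop :=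
  exists n, has_kraus Phi n.

Definition hs_adjoint d1 d2 (Phi : 'M[C]_d1 -> 'M[C]_d2)
  (Psi : 'M[C]_d2 -> 'M[C]_d1) : Prop :=
  forall X Y, \tr (adjmx (Psi Y) *m X) = \tr (adjmx Y *m Phi X).

Definition CPset d1 d2 (A : 'M[C]_d1) (B : 'M[C]_d2)
  (Phi : 'M[C]_d1 -> 'M[C]_d2) : Prop :=
  [/\ completely_positive Phi, Phi 1%:M = B &
      exists Psi, hs_adjoint Phi Psi /\ Psi 1%:M = A].

Definition extreme_point d1 d2 (K : ('M[C]_d1 -> 'M[C]_d2) -> Prop)
  (Phi : 'M[C]_d1 -> 'M[C]_d2) : Prop :=
  K Phi /\
  ~ (exists (t : R) (Phi1 Phi2 : 'M[C]_d1 -> 'M[C]_d2),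
        [/\ 0 < t < 1, K Phi1, K Phi2, Phi1 <> Phi2 &
            Phi = (fun X => t%:C *: Phi1 X + (1 - t)%:C *: Phi2 X)]).

Definition kraus_rank_is d1 d2 (Phi : 'M[C]_d1 -> 'M[C]_d2) (r : nat) : Prop :=
  has_kraus Phi r /\ forall m, has_kraus Phi m -> (r <= m)%N.

Definition sigma : 'M[C]_2 :=
  \matrix_(i < 2, j < 2)
    (if (i == j) then (if (val i == 0%N) then (3%:R^-1)%:C else (2%:R / 3%:R)%:C)
     else 0).

End QChannels.

(* Main.v *)
Require Import Defs.
From mathcomp Require Import all_boot all_order all_algebra.
From mathcomp Require Import complex reals.
From mathcomp Require Import ring lra.
From Stdlib Require Import FunctionalExtensionality.
Set Implicit Arguments. Unset Strict Implicit. Unset Printing Implicit Defensive.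
Import Order.TTheory GRing.Theory Num.Theory.
Local Open Scope ring_scope.
Local Open Scope complex_scope.
Section T.
Variable R : realType.
Local Notation C := R[i].
Arguments conjc : simpl never.
Local Notation i0 := (@ord0 1).
Local Notation i1 := (@ord_max 1).

Lemma sum2 (V : nmodType) (F : 'I_2 -> V) : \sum_(i < 2) F i = F i0 + F i1.
Proof. rewrite big_ord_recl big_ord1; congr (F _ + F _); exact: val_inj. Qed.

Lemma ord2 (a : 'I_2) : a = i0 \/ a = i1.
Proof. case: a => [[|[|//]] H]; [left|right]; exact: val_inj. Qed.

Lemma adjmxE m n (A : 'M[C]_(m, n)) i j : adjmx A i j = (A j i)^*%C.
Proof. by rewrite !mxE. Qed.

Lemma kraus_entry m n (L : 'M[C]_(m, n)) X a b :
  (L *m X *m adjmx L) a b = \sum_k \sum_l L a k * X k l * (L b l)^*%C.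
Proof.
rewrite mxE; under eq_bigr => l _ do rewrite adjmxE mxE mulr_suml.
exact: exchange_big.
Qed.

Lemma kraus_entry2 (L X : 'M[C]_2) a b :
  (L *m X *m adjmx L) a b = L a i0 * X i0 i0 * (L b i0)^*%C + L a i0 * X i0 i1 * (L b i1)^*%C
     + L a i1 * X i1 i0 * (L b i0)^*%C + L a i1 * X i1 i1 * (L b i1)^*%C.
Proof. by rewrite kraus_entry !sum2 addrA. Qed.

Lemma delta_entry (L : 'M[C]_2) k l a b :
  (L *m delta_mx k l *m adjmx L) a b = L a k * (L b l)^*%C.
Proof.
rewrite kraus_entry2 !mxE.
case: (ord2 k) => ->; case: (ord2 l) => -> /=; ring.
Qed.

Lemma adjmx_mul m n p (A : 'M[C]_(m, n)) (B : 'M[C]_(n, p)) :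
  adjmx (A *m B) = adjmx B *m adjmx A.
Proof. by rewrite /adjmx map_mxM trmx_mul. Qed.

Lemma adjmxK m n (A : 'M[C]_(m, n)) : adjmx (adjmx A) = A.
Proof. by apply/matrixP => i j; rewrite !adjmxE conjcK. Qed.

Lemma adjmx_sum m n k (A : 'I_k -> 'M[C]_(m, n)) :
  adjmx (\sum_j A j) = \sum_j adjmx (A j).
Proof.
apply/matrixP => i j; rewrite adjmxE !summxE rmorph_sum.
by apply: eq_bigr => l _; rewrite adjmxE.
Qed.

Lemma hs_kraus d1 d2 n (L : 'I_n -> 'M[C]_(d2, d1)) :
  hs_adjoint (fun X => \sum_j L j *m X *m adjmx (L j))
             (fun Y => \sum_j adjmx (L j) *m Y *m L j).
Proof.
move=> X Y /=.
rewrite adjmx_sum mulmx_suml mulmx_sumr !raddf_sum /=.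
apply: eq_bigr => j _.
rewrite !adjmx_mul adjmxK -!mulmxA mxtrace_mulC -!mulmxA.
done.
Qed.


Lemma sum4 n (f g h k : 'I_n -> C) (c1 c2 c3 c4 : C) :
  \sum_j (c1 * f j + c2 * g j + c3 * h j + c4 * k j) =
  c1 * \sum_j f j + c2 * \sum_j g j + c3 * \sum_j h j + c4 * \sum_j k j.
Proof. by rewrite !big_split /= !mulr_sumr. Qed.

Lemma sigmaE a b : sigma R a b =
  if a == b then (if val a == 0%N then 3%:R^-1 else 2%:R / 3%:R) else 0.
Proof.
rewrite mxE; case: (a == b) => //; case: (val a == 0%N) => //.
  by rewrite fmorphV rmorph_nat.
by rewrite rmorphM fmorphV !rmorph_nat.
Qed.

Definition Mf (X : 'M[C]_2) (a b : 'I_2) : C :=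
  if val a == 0%N then
    (if val b == 0%N then 9%:R^-1 * X i0 i0 + 2%:R / 9%:R * X i1 i1
     else 2%:R / 9%:R * X i1 i0 + 2%:R / 9%:R * X i0 i1)
  else
    (if val b == 0%N then 2%:R / 9%:R * X i1 i0 + 2%:R / 9%:R * X i0 i1
     else 2%:R / 9%:R * X i0 i0 + 4%:R / 9%:R * X i1 i1).

Section Structured.
Variables (n : nat) (L : 'I_n -> 'M[C]_2) (F : 'M[C]_2 -> 'M[C]_2).
Hypothesis HF : forall X, F X = \sum_j L j *m X *m adjmx (L j).
Hypothesis H01 : forall j, L j i1 i0 = L j i0 i1.
Hypothesis H11 : forall j, L j i1 i1 = 2%:R * L j i0 i0.
Hypothesis H1 : F 1%:M = sigma R.

Let p j := L j i0 i0.
Let q j := L j i0 i1.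
Let P := \sum_j p j * (p j)^*%C.
Let Qq := \sum_j q j * (q j)^*%C.
Let Z := \sum_j q j * (p j)^*%C.
Let W := \sum_j p j * (q j)^*%C.

Let entry_gen X a b (c1 c2 c3 c4 : C) :
  (forall j, (L j *m X *m adjmx (L j)) a b =
     c1 * (p j * (p j)^*%C) + c2 * (q j * (q j)^*%C) + c3 * (q j * (p j)^*%C) + c4 * (p j * (q j)^*%C)) ->
  F X a b = c1 * P + c2 * Qq + c3 * Z + c4 * W.
Proof.
move=> H; rewrite HF summxE (eq_bigr _ (fun j _ => H j)).
by rewrite sum4.
Qed.

Let E00 X : F X i0 i0 = X i0 i0 * P + X i1 i1 * Qq + X i1 i0 * Z + X i0 i1 * W.
Proof. apply: entry_gen => j; rewrite kraus_entry2 ?H01 ?H11 ?rmorphM ?rmorph_nat /p /q; ring. Qed.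
Let E01 X : F X i0 i1 = (2%:R * X i0 i1) * P + X i1 i0 * Qq + (2%:R * X i1 i1) * Z + X i0 i0 * W.
Proof. apply: entry_gen => j; rewrite kraus_entry2 ?H01 ?H11 ?rmorphM ?rmorph_nat /p /q; ring. Qed.
Let E10 X : F X i1 i0 = (2%:R * X i1 i0) * P + X i0 i1 * Qq + X i0 i0 * Z + (2%:R * X i1 i1) * W.
Proof. apply: entry_gen => j; rewrite kraus_entry2 ?H01 ?H11 ?rmorphM ?rmorph_nat /p /q; ring. Qed.
Let E11 X : F X i1 i1 = (4%:R * X i1 i1) * P + X i0 i0 * Qq + (2%:R * X i0 i1) * Z + (2%:R * X i1 i0) * W.
Proof. apply: entry_gen => j; rewrite kraus_entry2 ?H01 ?H11 ?rmorphM ?rmorph_nat /p /q; ring. Qed.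

Lemma structured_vals : [/\ P = 9%:R^-1, Qq = 2%:R / 9%:R, Z = 0 & W = 0].
Proof.
have e00 := E00 1%:M; have e01 := E01 1%:M; have e10 := E10 1%:M; have e11 := E11 1%:M.
rewrite H1 !sigmaE !mxE /= in e00 e01 e10 e11.
rewrite ?(mul1r, mul0r, mulr0, mulr1, addr0, add0r) in e00 e01 e10 e11.
have hP : P = 9%:R^-1.
  have -> : P = ((4%:R * P + Qq) - (P + Qq)) / 3%:R by field.
  by rewrite -e00 -e11; field.
have hZ : Z = 0.
  have -> : Z = (2%:R * (2%:R * Z + W) - (Z + 2%:R * W)) / 3%:R by field.
  by rewrite -e01 -e10; field.
have hW : W = 0.
  have -> : W = (2%:R * (Z + 2%:R * W) - (2%:R * Z + W)) / 3%:R by field.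
  by rewrite -e01 -e10; field.
split => //.
have -> : Qq = (P + Qq) - P by ring.
by rewrite -e00 hP; field.
Qed.

Lemma structured_eq X a b : F X a b = Mf X a b.
Proof.
case: structured_vals => hP hQ hZ hW.
rewrite /Mf; case: (ord2 a) => ->; case: (ord2 b) => -> /=.
- by rewrite E00 hP hQ hZ hW; ring.
- by rewrite E01 hP hQ hZ hW; ring.
- by rewrite E10 hP hQ hZ hW; ring.
- by rewrite E11 hP hQ hZ hW; ring.
Qed.

End Structured.

Definition Q1 (F : 'M[C]_2 -> 'M[C]_2) : C :=
  F (delta_mx i1 i1) i0 i0 + F (delta_mx i0 i0) i1 i1
  - F (delta_mx i1 i0) i0 i1 - F (delta_mx i0 i1) i1 i0.
Definition Q2 (F : 'M[C]_2 -> 'M[C]_2) : C :=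
  4%:R * F (delta_mx i0 i0) i0 i0 + F (delta_mx i1 i1) i1 i1
  - 2%:R * F (delta_mx i0 i1) i0 i1 - 2%:R * F (delta_mx i1 i0) i1 i0.

Lemma Q1_kraus n (L : 'I_n -> 'M[C]_2) F :
  (forall X, F X = \sum_j L j *m X *m adjmx (L j)) ->
  Q1 F = \sum_j (L j i0 i1 - L j i1 i0) * (L j i0 i1 - L j i1 i0)^*%C.
Proof.
move=> HF; rewrite /Q1 !HF !summxE -big_split -!sumrB /=.
by apply: eq_bigr => j _; rewrite !delta_entry rmorphB; ring.
Qed.

Lemma Q2_kraus n (L : 'I_n -> 'M[C]_2) F :
  (forall X, F X = \sum_j L j *m X *m adjmx (L j)) ->
  Q2 F = \sum_j (2%:R * L j i0 i0 - L j i1 i1) * (2%:R * L j i0 i0 - L j i1 i1)^*%C.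
Proof.
move=> HF; rewrite /Q2 !HF !summxE !mulr_sumr -big_split -!sumrB /=.
by apply: eq_bigr => j _; rewrite !delta_entry rmorphB rmorphM rmorph_nat; ring.
Qed.

Lemma Q1_comb (t : R) F1 F2 :
  Q1 (fun X => t%:C *: F1 X + (1 - t)%:C *: F2 X) = t%:C * Q1 F1 + (1 - t)%:C * Q1 F2.
Proof. rewrite /Q1 !mxE; ring. Qed.
Lemma Q2_comb (t : R) F1 F2 :
  Q2 (fun X => t%:C *: F1 X + (1 - t)%:C *: F2 X) = t%:C * Q2 F1 + (1 - t)%:C * Q2 F2.
Proof. rewrite /Q2 !mxE; ring. Qed.

Lemma comb0 (t : R) (x y : C) : 0 < t < 1 -> 0 <= x -> 0 <= y ->
  t%:C * x + (1 - t)%:C * y = 0 -> x = 0 /\ y = 0.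
Proof.
case/andP => t0 t1 x0 y0 h.
have tC : 0 < t%:C by rewrite ltcR.
have tC' : 0 < (1 - t)%:C by rewrite ltcR subr_gt0.
move/eqP: h; rewrite paddr_eq0; [|exact: mulr_ge0 (ltW tC) x0|exact: mulr_ge0 (ltW tC') y0].
rewrite !mulf_eq0 (gt_eqF tC) (gt_eqF tC') /=.
by case/andP => /eqP -> /eqP ->.
Qed.

Lemma sum_norm0 n (z : 'I_n -> C) : \sum_j z j * (z j)^*%C = 0 -> forall j, z j = 0.
Proof.
move=> h j; have := @psumr_eq0P _ _ xpredT (fun j => z j * (z j)^*%C) (fun j _ => mulcJ_ge0 (z j)) h j isT.
by move/eqP; rewrite mulf_eq0 conjc_eq0 orbb => /eqP.
Qed.

Lemma sum_norm_ge0 n (z : 'I_n -> C) : 0 <= \sum_j z j * (z j)^*%C.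
Proof. by apply: sumr_ge0 => j _; exact: mulcJ_ge0. Qed.


Definition a0 : C := Complex (3%:R^-1) (3%:R^-1).
Definition K1 : 'M[C]_2 := \matrix_(i < 2, j < 2) (if i == j then 0 else a0).
Definition K2 : 'M[C]_2 := \matrix_(i < 2, j < 2)
  (if i == j then (if val i == 0%N then 3%:R^-1 else 2%:R / 3%:R) else 0).
Definition Kf (k : 'I_2) : 'M[C]_2 := if val k == 0%N then K1 else K2.
Definition Phi (X : 'M[C]_2) : 'M[C]_2 := \sum_(k < 2) Kf k *m X *m adjmx (Kf k).
Definition Psi (X : 'M[C]_2) : 'M[C]_2 := \sum_(k < 2) adjmx (Kf k) *m X *m Kf k.

Lemma a0_norm : a0 * a0^*%C = 2%:R / 9%:R.
Proof.
have -> : (2%:R / 9%:R : C) = (2%:R / 9%:R : R)%:C by rewrite rmorphM fmorphV !rmorph_nat.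
apply/eqP; rewrite eq_complex /=; apply/andP; split; apply/eqP; field; done.
Qed.

Lemma a0_neq0 : a0 != 0.
Proof.
apply/negP => /eqP h; have := a0_norm; rewrite h mul0r => /eqP.
by rewrite eq_sym mulf_eq0 invr_eq0 !pnatr_eq0.
Qed.

Lemma a0J : a0^*%C = 2%:R / 9%:R / a0.
Proof. by rewrite -a0_norm; field; exact: a0_neq0. Qed.

Lemma cj_div (m n : nat) : ((m%:R / n%:R : C))^*%C = m%:R / n%:R.
Proof. by rewrite rmorphM fmorphV !rmorph_nat. Qed.
Lemma cj_inv (n : nat) : ((n%:R^-1 : C))^*%C = n%:R^-1.
Proof. by rewrite fmorphV !rmorph_nat. Qed.
Lemma cj0 : (0 : C)^*%C = 0.
Proof. exact: rmorph0. Qed.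

Ltac csimp := rewrite ?cj_div ?cj_inv ?cj0 ?a0J; field; rewrite ?a0_neq0.

Lemma Phi_kraus X : Phi X = \sum_(k < 2) Kf k *m X *m adjmx (Kf k).
Proof. by []. Qed.

Lemma Kf01 k : Kf k i1 i0 = Kf k i0 i1.
Proof. by case: (ord2 k) => -> ; rewrite /Kf /= !mxE. Qed.
Lemma Kf11 k : Kf k i1 i1 = 2%:R * Kf k i0 i0.
Proof. by case: (ord2 k) => -> ; rewrite /Kf /= !mxE /=; [ring | field]. Qed.

Lemma Phi1 : Phi 1%:M = sigma R.
Proof.
apply/matrixP => x y; rewrite /Phi summxE sum2 sigmaE !kraus_entry2 /Kf /= !mxE.
by case: (ord2 x) => ->; case: (ord2 y) => -> /=; csimp.
Qed.

Lemma Psi1 : Psi 1%:M = sigma R.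
Proof.
apply/matrixP => x y; rewrite /Psi summxE sum2 sigmaE /Kf /= !mulmx1 !mxE !sum2 !mxE.
by case: (ord2 x) => ->; case: (ord2 y) => -> /=; csimp.
Qed.


Lemma Q_ge0 F : CPset (sigma R) (sigma R) F -> 0 <= Q1 F /\ 0 <= Q2 F.
Proof.
case=> [[n [L HL]] _ _]; rewrite (Q1_kraus HL) (Q2_kraus HL).
by split; exact: sum_norm_ge0.
Qed.

Lemma cp_struct F : CPset (sigma R) (sigma R) F -> Q1 F = 0 -> Q2 F = 0 -> F = Phi.
Proof.
case=> [[n [L HL]] HF1 _]; rewrite (Q1_kraus HL) (Q2_kraus HL) => q1 q2.
have z1 := sum_norm0 q1; have z2 := sum_norm0 q2.
have H01 : forall j, L j i1 i0 = L j i0 i1.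
  by move=> j; apply/esym/eqP; rewrite -subr_eq0 z1.
have H11 : forall j, L j i1 i1 = 2%:R * L j i0 i0.
  by move=> j; apply/esym/eqP; rewrite -subr_eq0 z2.
apply: functional_extensionality => X; apply/matrixP => x y.
by rewrite (structured_eq HL H01 H11 HF1) (structured_eq Phi_kraus Kf01 Kf11 Phi1).
Qed.

Lemma Phi_cp : CPset (sigma R) (sigma R) Phi.
Proof.
split; [by exists 2%N, Kf | exact: Phi1 |].
by exists Psi; split; [exact: (hs_kraus Kf) | exact: Psi1].
Qed.

Lemma Q1Phi : Q1 Phi = 0.
Proof.
rewrite (Q1_kraus Phi_kraus) big1 // => k _; by rewrite Kf01 subrr mul0r.
Qed.
Lemma Q2Phi : Q2 Phi = 0.
Proof.
rewrite (Q2_kraus Phi_kraus) big1 // => k _; by rewrite Kf11 subrr mul0r.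
Qed.

Lemma Phi_extreme : extreme_point (CPset (sigma R) (sigma R)) Phi.
Proof.
split; first exact: Phi_cp.
case=> t [F1 [F2 [ht hF1 hF2 hne heq]]].
have [a1 b1] := Q_ge0 hF1; have [a2 b2] := Q_ge0 hF2.
have h1 := Q1_comb t F1 F2; rewrite -heq Q1Phi in h1.
have h2 := Q2_comb t F1 F2; rewrite -heq Q2Phi in h2.
have [c1 c2] := comb0 ht a1 a2 (esym h1).
have [d1 d2] := comb0 ht b1 b2 (esym h2).
by apply: hne; rewrite (cp_struct hF1 c1 d1) (cp_struct hF2 c2 d2).
Qed.

Lemma Phi_rank : kraus_rank_is Phi 2.
Proof.
split; first by exists Kf.
case=> [|[|m]] // [L HL].
- have := Phi1; move/matrixP/(_ i0 i0); rewrite HL big_ord0 sigmaE !mxE /= => /eqP.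
  by rewrite eq_sym invr_eq0 pnatr_eq0.
- have E k l : Phi (delta_mx k l) i0 i0 = L ord0 i0 k * (L ord0 i0 l)^*%C.
    by rewrite HL big_ord1 delta_entry.
  have M k l : Phi (delta_mx k l) i0 i0 = Mf (delta_mx k l) i0 i0.
    exact: (structured_eq Phi_kraus Kf01 Kf11 Phi1).
  have : Phi (delta_mx i0 i0) i0 i0 * Phi (delta_mx i1 i1) i0 i0 =
         Phi (delta_mx i0 i1) i0 i0 * Phi (delta_mx i1 i0) i0 i0.
    by rewrite !E; ring.
  rewrite !M /Mf /= !mxE /= => /eqP.
  by rewrite !(mulr0, mul0r, mulr1, add0r, addr0) !mulf_eq0 !invr_eq0 !pnatr_eq0.
Qed.

End T.

Theorem mainTheorem7 (R : realType) :
  exists Phi : 'M[R[i]]_2 -> 'M[R[i]]_2,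
    extreme_point (CPset (sigma R) (sigma R)) Phi /\ kraus_rank_is Phi 2.
Proof. exists (@Phi R); split; [exact: Phi_extreme | exact: Phi_rank]. Qed.
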